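(* Let $(f,g)$ be a Ribaucour pair of $(\mathfrak{m}^1,\mathfrak{m}^2)$-type such that the cross-ratios of all its quadrilaterals $(f_i,f_j,g_j,g_i)$ are equal. Let $\lambda\in\mathbb{R}$ and let $\sigma_n$ be the inversion in $\mathfrak{n}:=\mathfrak{m}^1+\lambda\mathfrak{m}^2+\langle\mathfrak{m}^1+\lambda\mathfrak{m}^2,\mathfrak{p}\rangle\mathfrak{p}$. Then the cross-ratios of all quadrilaterals of the Ribaucour pair $(f,\sigma_n(g))$ are again equal.
   Context: Light cone model: $\mathbb{R}^{4,2}$ with form of signature $(4,2)$, light cone $\mathcal{L}$, $\mathbb{P}(\mathcal{L})$; fixed $\mathfrak{p}$, $\langle\mathfrak{p},\mathfrak{p}\rangle=-1$; $v$ with $\langle\mathfrak{v},\mathfrak{p}\rangle=0$ are points of $\mathbb{R}^3\cup\{\infty\}$, others oriented spheres; incidence = orthogonality. Inversion in $\mathfrak{a}$ ($\langle\mathfrak{a},\mathfrak{a}\rangle\ne0$): $\sigma_a(x)=x-\frac{2\langle x,\mathfrak{a}\rangle}{\langle\mathfrak{a},\mathfrak{a}\rangle}\mathfrak{a}$; M-inversion if $\mathfrak{a}\perp\mathfrak{p}$. Discrete curves map consecutive integers to points. A Ribaucour pair $(f,g)$: $f_i,f_j,g_j,g_i$ concircular for each edge $(ij)$; choosing representatives with $\mathfrak{f}_i-\mathfrak{f}_j+\mathfrak{g}_j-\mathfrak{g}_i=0$, the R-evolution map consists of the M-inversions in $\mathfrak{r}_{ij}=\mathfrak{f}_i-\mathfrak{f}_j=\mathfrak{g}_i-\mathfrak{g}_j$.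 The pair is of $(\mathfrak{m}^1,\mathfrak{m}^2)$-type if $\mathrm{span}\{\mathfrak{m}^1,\mathfrak{m}^2,\mathfrak{p}\}$ is 3-dimensional and all its elements are fixed by all inversions of the R-evolution map. (By an earlier result, $(f,\sigma_n(g))$ is again a Ribaucour pair with the same R-evolution map.) Cross-ratio means the (real) cross-ratio of four concircular points with a fixed standard convention. *)

(* Defs.v *)
(* Light cone model of Lie sphere geometry in R^{4,2}. *)
From HB Require Import structures.
From mathcomp Require Import all_boot all_order all_algebra.
Set Implicit Arguments. Unset Strict Implicit. Unset Printing Implicit Defensive.
Import Order.TTheory GRing.Theory Num.Theory.
Local Open Scope ring_scope.

Section LieSphere.
Variable R : realFieldType.
Notation V := 'rV[R]_6.

Definition eta (k : 'I_6) : R := if (k < 4)%N then 1 else -1.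

Definition lie (x y : V) : R := \sum_(k < 6) eta k * x 0 k * y 0 k.

Definition sigma (a x : V) : V := x - ((2 * lie x a) / lie a a) *: a.

(* x represents a point of R^3 u {oo}: nonzero lightlike and orthogonal to p *)
Definition is_point (p x : V) : Prop := [/\ x != 0, lie x x = 0 & lie x p = 0].

(* x and y represent distinct points of P(L) *)
Definition distinct_pt (x y : V) : Prop := forall k : R, y != k *: x /\ x != k *: y.

(* four points lie on a common circle: they span at most a 3-dim subspace *)
Definition concircular (a b c d : V) : Prop :=
  (\rank (col_mx (col_mx a b) (col_mx c d)) <= 3)%N.

Definition nondeg_quad (a b c d : V) : Prop :=
  [/\ distinct_pt a b, distinct_pt a c, distinct_pt a d
    & [/\ distinct_pt b c, distinct_pt b d & distinct_pt c d]].

(* discrete curves are maps int -> V (representatives); the edges are (i, i+1) *)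
Definition ribaucour_pair (p : V) (f g : int -> V) : Prop :=
  (forall i, is_point p (f i) /\ is_point p (g i)) /\
  (forall i, concircular (f i) (f (i + 1)) (g (i + 1)) (g i) /\
             nondeg_quad (f i) (f (i + 1)) (g (i + 1)) (g i)).

(* r is (a representative of) r_ij = f_i - f_j = g_i - g_j for edge (i,i+1),
   computed from representatives chosen with f_i - f_j + g_j - g_i = 0 *)
Definition revol_vec (f g : int -> V) (i : int) (r : V) : Prop :=
  exists a b c d : R,
    [/\ [/\ a != 0, b != 0, c != 0 & d != 0],
        a *: f i - b *: f (i + 1) + c *: g (i + 1) - d *: g i = 0
      & r = a *: f i - b *: f (i + 1)].

(* (m1,m2)-type: span{m1,m2,p} is 3-dim and pointwise fixed by all
   inversions of the R-evolution map *)
Definition of_type (p : V) (f g : int -> V) (m1 m2 : V) : Prop :=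
  \rank (col_mx m1 (col_mx m2 p)) = 3%N /\
  forall i r, revol_vec f g i r ->
    forall al be ga : R,
      sigma r (al *: m1 + be *: m2 + ga *: p) = al *: m1 + be *: m2 + ga *: p.

(* If c1 x1 + c2 x2 + c3 x3 + c4 x4 = 0 is the (unique up to scale) linear
   relation, then cr = - c2 <x1,x2> / (c4 <x1,x4>); with the circle
   parametrised by t, this equals (t1-t2)(t3-t4)/((t2-t3)(t4-t1)). *)
Definition cross_ratio (x1 x2 x3 x4 : V) (q : R) : Prop :=
  exists c1 c2 c3 c4 : R,
    [/\ c1 *: x1 + c2 *: x2 + c3 *: x3 + c4 *: x4 = 0, c2 != 0, c4 != 0
      & q = - (c2 * lie x1 x2) / (c4 * lie x1 x4)].

Definition nvec (p m1 m2 : V) (lam : R) : V :=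
  (m1 + lam *: m2) + lie (m1 + lam *: m2) p *: p.

End LieSphere.

(* Main.v *)
Require Import Defs.
From HB Require Import structures.
From mathcomp Require Import all_boot all_order all_algebra ring lra zify.
Import Order.TTheory GRing.Theory Num.Theory.
Local Open Scope ring_scope.
Set Implicit Arguments. Unset Strict Implicit.

Section H.
Variable R : realFieldType.
Notation V := 'rV[R]_6.
Implicit Types x y z w : V.

Lemma lieC x y : lie x y = lie y x.
Proof. rewrite /lie; apply: eq_bigr => k _; ring. Qed.
Lemma lieDl x y z : lie (x + y) z = lie x z + lie y z.
Proof. rewrite /lie -big_split; apply: eq_bigr => k _ /=; rewrite mxE; ring. Qed.
Lemma lieZl a x z : lie (a *: x) z = a * lie x z.
Proof. rewrite /lie mulr_sumr; apply: eq_bigr => k _ /=; rewrite mxE; ring. Qed.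
Lemma lieNl x z : lie (- x) z = - lie x z.
Proof. by rewrite -scaleN1r lieZl mulN1r. Qed.
Lemma lieBl x y z : lie (x - y) z = lie x z - lie y z.
Proof. by rewrite lieDl lieNl. Qed.
Lemma lie0l z : lie 0 z = 0.
Proof. by rewrite -(scale0r 0) lieZl mul0r. Qed.
Lemma lieDr x y z : lie z (x + y) = lie z x + lie z y.
Proof. by rewrite lieC lieDl !(lieC z). Qed.
Lemma lieZr a x z : lie z (a *: x) = a * lie z x.
Proof. by rewrite lieC lieZl lieC. Qed.
Lemma lieNr x z : lie z (- x) = - lie z x.
Proof. by rewrite lieC lieNl lieC. Qed.
Lemma lieBr x y z : lie z (x - y) = lie z x - lie z y.
Proof. by rewrite lieDr lieNr. Qed.
Lemma lie0r z : lie z 0 = 0.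
Proof. by rewrite lieC lie0l. Qed.

Definition lieE := (lieDl, lieZl, lieNl, lie0l, lieDr, lieZr, lieNr, lie0r).

Lemma lie_pos w : (forall k : 'I_6, (4 <= k)%N -> w 0 k = 0) ->
  0 <= lie w w /\ (lie w w = 0 -> w = 0).
Proof.
move=> H.
have Ht : forall k : 'I_6, true -> 0 <= Defs.eta R k * w 0 k * w 0 k.
  move=> k _; rewrite /Defs.eta; case: ifP => hk.
    by rewrite mul1r -expr2 sqr_ge0.
  by rewrite H ?mulr0 // leqNgt hk.
split; first exact: sumr_ge0.
move=> /eqP; rewrite /lie psumr_eq0 // => /allP Hall.
apply/rowP => k; rewrite !mxE.
have := Hall k (mem_index_enum _); rewrite /Defs.eta; case: ifP => hk.
  by rewrite mul1r mulf_eq0 orbb => /eqP.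
by rewrite H // leqNgt hk.
Qed.

Lemma lie_sq_expand a b c x y z :
  lie (a *: x + b *: y + c *: z) (a *: x + b *: y + c *: z) =
  a^+2 * lie x x + b^+2 * lie y y + c^+2 * lie z z
  + 2 * a * b * lie x y + 2 * a * c * lie x z + 2 * b * c * lie y z.
Proof.
rewrite !lieE (lieC y x) (lieC z x) (lieC z y); ring.
Qed.

Lemma prop_of x y a : a != 0 -> a *: y = x -> y = a^-1 *: x.
Proof. by move=> ha <-; rewrite scalerA mulVf // scale1r. Qed.

Lemma lorentz p x y : lie p p = -1 -> x != 0 -> lie x x = 0 -> lie y y = 0 ->
  lie x p = 0 -> lie y p = 0 -> distinct_pt x y -> lie x y != 0.
Proof.
move=> Hp Hx0 Hxx Hyy Hxp Hyp Hd; apply/eqP => Hxy.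
pose i4 : 'I_6 := @Ordinal 6 4 isT; pose i5 : 'I_6 := @Ordinal 6 5 isT.
have H45 : forall w : V, w 0 i4 = 0 -> w 0 i5 = 0 ->
    forall k : 'I_6, (4 <= k)%N -> w 0 k = 0.
  move=> w h4 h5 [[|[|[|[|[|[|k]]]]]] Hk] //= _.
  - by rewrite -h4; congr (w 0 _); exact: val_inj.
  - by rewrite -h5; congr (w 0 _); exact: val_inj.
pose D := x 0 i4 * y 0 i5 - x 0 i5 * y 0 i4.
case: (eqVneq D 0) => HD.
- case: (eqVneq (x 0 i4) 0) => hx4.
  + case: (eqVneq (x 0 i5) 0) => hx5.
      by have [_ /(_ Hxx) h] := lie_pos (H45 x hx4 hx5); rewrite h eqxx in Hx0.
    pose w := y 0 i5 *: x + (- x 0 i5) *: y + 0 *: p.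
    have [_ h] : 0 <= lie w w /\ (lie w w = 0 -> w = 0).
      apply: lie_pos; apply: H45; rewrite /w !mxE.
        by apply: etrans HD; rewrite /D; ring.
      ring.
    have := h; rewrite lie_sq_expand Hxx Hyy Hxy; move/(_ ltac:(ring)).
    rewrite /w scale0r addr0 => /eqP; rewrite addr_eq0 => /eqP.
    rewrite scaleNr opprK => /esym /(prop_of hx5) E.
    by have [] := Hd ((x 0 i5)^-1 * y 0 i5); rewrite {1}E scalerA eqxx.
  + pose w := y 0 i4 *: x + (- x 0 i4) *: y + 0 *: p.
    have [_ h] : 0 <= lie w w /\ (lie w w = 0 -> w = 0).
      apply: lie_pos; apply: H45; rewrite /w !mxE.
        ring.
      by transitivity (- D); [rewrite /D; ring | rewrite HD oppr0].
    have := h; rewrite lie_sq_expand Hxx Hyy Hxy; move/(_ ltac:(ring)).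
    rewrite /w scale0r addr0 => /eqP; rewrite addr_eq0 => /eqP.
    rewrite scaleNr opprK => /esym /(prop_of hx4) E.
    by have [] := Hd ((x 0 i4)^-1 * y 0 i4); rewrite {1}E scalerA eqxx.
- pose a := (p 0 i4 * y 0 i5 - p 0 i5 * y 0 i4) / D.
  pose b := (x 0 i4 * p 0 i5 - x 0 i5 * p 0 i4) / D.
  pose w := (- a) *: x + (- b) *: y + 1 *: p.
  have [h _] : 0 <= lie w w /\ (lie w w = 0 -> w = 0).
    apply: lie_pos; apply: H45; rewrite /w !mxE /a /b.
      by rewrite /D; field.
    by rewrite /D; field.
  move: h; rewrite lie_sq_expand Hxx Hyy Hxy Hp Hxp Hyp.
  have -> : (-a) ^+ 2 * 0 + (-b) ^+ 2 * 0 + 1 ^+ 2 * -1 + 2 * - a * - b * 0 +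
    2 * - a * 1 * 0 + 2 * - b * 1 * 0 = -1 :> R by ring.
  by rewrite ler0N1.
Qed.

Lemma distC x y : distinct_pt x y -> distinct_pt y x.
Proof. by move=> H k; have [] := H k. Qed.

Lemma no3 u v w a b c : lie u u = 0 -> lie v v = 0 -> lie w w = 0 ->
  lie v w != 0 -> distinct_pt u w -> a != 0 -> c != 0 ->
  a *: u + b *: v + c *: w = 0 -> False.
Proof.
move=> Hu Hv Hw Hvw Hd ha hc E.
have E1 : a *: u = (- b) *: v + (- c) *: w.
  by apply/rowP => k; have := congr1 (fun z => z 0 k) E; rewrite !mxE => e;
     transitivity (a * u 0 k + b * v 0 k + c * w 0 k - b * v 0 k - c * w 0 k);
     [ring | rewrite e; ring].
have := congr1 (fun z => lie z z) E1; rewrite /= !lieE Hu Hv Hw (lieC w v) => e.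
have hbc : b * c * lie v w = 0.
  have : 2 * (b * c * lie v w) = 0 by transitivity (a * (a * 0)); [rewrite e; ring | ring].
  by move/eqP; rewrite mulf_eq0 pnatr_eq0 /= => /eqP.
move/eqP: hbc; rewrite !mulf_eq0 (negbTE hc) (negbTE Hvw) !orbF => /eqP hb.
move: E1; rewrite hb scaleNr scale0r oppr0 add0r => /esym.
move=> /(prop_of _) E2.
have hc' : - c != 0 by rewrite oppr_eq0.
have [] := Hd ((- c)^-1 * a); by rewrite (E2 hc') scalerA eqxx.
Qed.

Lemma int_const (h : int -> R) : (forall i, h (i + 1) = h i) -> forall i, h i = h 0.
Proof.
move=> H i.
have Hp : forall m : nat, h m = h 0.
  elim=> // m IH; rewrite -IH -(H m); congr h; lia.
have Hn : forall m : nat, h (- m%:Z) = h 0.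
  elim=> // m IH; rewrite -IH -(H (- m.+1%:Z)); congr h; lia.
by case: i => m; [exact: Hp | rewrite NegzE; exact: Hn].
Qed.

Lemma sig_null n y : lie n n != 0 -> lie y y = 0 -> lie (sigma n y) (sigma n y) = 0.
Proof. by move=> hn hy; rewrite /sigma !(lieE, lieBl, lieBr) hy (lieC n y); field. Qed.

Lemma sig_perp n y p : lie n p = 0 -> lie y p = 0 -> lie (sigma n y) p = 0.
Proof. by move=> hn hy; rewrite /sigma lieBl lieZl hn hy; ring. Qed.

Lemma lie_sigma_l x n y : lie x (sigma n y) = lie x y - 2 * lie y n / lie n n * lie x n.
Proof. by rewrite /sigma lieBr lieZr. Qed.
End H.

Theorem proposition3p2 (R : realFieldType) (p m1 m2 : 'rV[R]_6)
    (f g : int -> 'rV[R]_6) (lam : R) :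
  lie p p = -1 ->
  ribaucour_pair p f g ->
  of_type p f g m1 m2 ->
  (exists q : R, forall i : int,
      cross_ratio (f i) (f (i + 1)) (g (i + 1)) (g i) q) ->
  lie (nvec p m1 m2 lam) (nvec p m1 m2 lam) != 0 ->
  (forall i : int, nondeg_quad (f i) (f (i + 1))
      (sigma (nvec p m1 m2 lam) (g (i + 1))) (sigma (nvec p m1 m2 lam) (g i))) ->
  exists q' : R, forall i : int,
    cross_ratio (f i) (f (i + 1))
      (sigma (nvec p m1 m2 lam) (g (i + 1))) (sigma (nvec p m1 m2 lam) (g i)) q'.
Proof.
move=> Hp [Hpts Hrib] [_ Hfix] [q Hq] HN Hnd.
set n := nvec p m1 m2 lam in HN Hnd *.
have Hnp : lie n p = 0 by rewrite /n /nvec !lieE Hp; ring.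
have Hnfix : forall i r, revol_vec f g i r -> sigma r n = n.
  by move=> i r Hr; have := Hfix i r Hr 1 lam (lie (m1 + lam *: m2) p); rewrite scale1r.
clearbody n.
pose F i := lie (f i) n; pose G i := lie (g i) n; pose X i := lie (f i) (g i).
have key : forall i c1 c2 c3 c4,
    c1 *: f i + c2 *: f (i + 1) + c3 *: g (i + 1) + c4 *: g i = 0 ->
    c2 != 0 -> c4 != 0 ->
    [/\ c1 * F i + c2 * F (i + 1) = 0, c3 * G (i + 1) + c4 * G i = 0,
        c1 * c4 * X i = c2 * c3 * X (i + 1), c1 != 0 & c3 != 0].
  move=> i c1 c2 c3 c4 E h2 h4.
  have [[fi0 fif fip] [gi0 gig gip]] := Hpts i.
  have [[fj0 fjf fjp] [gj0 gjg gjp]] := Hpts (i + 1).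
  have [_ [dab dac dad [dbc dbd dcd]]] := Hrib i.
  have hA : lie (f i) (f (i + 1)) != 0 by apply: (lorentz Hp fi0 fif fjf fip fjp dab).
  have hB : lie (g (i + 1)) (g i) != 0 by apply: (lorentz Hp gj0 gjg gig gjp gip dcd).
  have h1 : c1 != 0.
    apply/negP => /eqP h1. apply: (no3 (b:=c3) fjf gjg gig hB dbd h2 h4).
    by move: E; rewrite h1 scale0r add0r.
  have h3 : c3 != 0.
    apply/negP => /eqP h3; apply: (no3 (b:=c1) gig fif fjf hA (distC dbd) h4 h2).
    by move: E; rewrite h3 scale0r addr0 => E; rewrite -[RHS]E; apply/rowP => k; rewrite !mxE; ring.
  pose r := c1 *: f i + c2 *: f (i + 1).
  have Hr : revol_vec f g i r.
    exists c1, (- c2), c3, (- c4); split; rewrite ?oppr_eq0 //.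
      by rewrite -[RHS]E; apply/rowP => k; rewrite !mxE; ring.
    by rewrite /r scaleNr opprK.
  have Er : r = - (c3 *: g (i + 1) + c4 *: g i).
    by apply/rowP => k; have := congr1 (fun z : 'rV[R]_6 => z 0 k) E; rewrite !mxE => e;
      rewrite /r ?mxE; transitivity (c1 * f i 0 k + c2 * f (i+1) 0 k + c3 * g (i+1) 0 k + c4 * g i 0 k - (c3 * g (i + 1) 0 k + c4 * g i 0 k)); [ring | rewrite e; ring].
  have Hrr : lie r r = 2 * c1 * c2 * lie (f i) (f (i + 1)).
    by rewrite /r !lieE fif fjf (lieC (f (i + 1))); ring.
  have Hrr' : lie r r = 2 * c3 * c4 * lie (g (i + 1)) (g i).
    by rewrite Er !(lieE, lieNl, lieNr) gig gjg (lieC (g i)); ring.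
  have hrr : lie r r != 0 by rewrite Hrr !mulf_neq0 // pnatr_eq0.
  have Hnr : lie n r = 0.
    have := Hnfix i r Hr; rewrite /sigma => /eqP; rewrite subr_eq addrC -subr_eq subrr.
    rewrite eq_sym scaler_eq0 => /orP [|/eqP r0]; last by rewrite r0 lie0l eqxx in hrr.
    by rewrite !mulf_eq0 invr_eq0 (negbTE hrr) pnatr_eq0 orbF lieC => /eqP.
  split => //.
  - by move: Hnr; rewrite /r !lieE /F !(lieC n).
  - by move: Hnr; rewrite Er !(lieE, lieNl, lieNr) /G !(lieC n) => /eqP; rewrite oppr_eq0 => /eqP.
  - have e1 : lie (f i) (c1 *: f i + c2 *: f (i + 1) + c3 *: g (i + 1) + c4 *: g i) = 0
      by rewrite E lie0r.
    have e4 : lie (g (i + 1)) (c1 *: f i + c2 *: f (i + 1) + c3 *: g (i + 1) + c4 *: g i) = 0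
      by rewrite E lie0r.
    rewrite !lieE fif gjg in e1 e4.
    have e5 := Hrr; rewrite Hrr' in e5.
    rewrite (lieC (g (i+1)) (f i)) (lieC (g (i+1)) (f (i+1))) in e4.
    set A := lie (f i) (f (i + 1)) in e1 e5 *.
    set B := lie (g (i + 1)) (g i) in e4 e5 *.
    set Y := lie (f i) (g (i + 1)) in e1 e4 *.
    set W := lie (f (i + 1)) (g (i + 1)) in e4 *.
    rewrite /X; set X0 := lie (f i) (g i) in e1 *.
    have e1' := congr1 (fun t => c1 * t) e1; have e4' := congr1 (fun t => c3 * t) e4.
    rewrite /= in e1' e4'. rewrite -/W. nra.
have HX : forall i, X i != 0.
  move=> i; have [[fi0 fif fip] [gi0 gig gip]] := Hpts i.
  have [_ [_ _ dad _]] := Hrib i.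
  exact: (lorentz Hp fi0 fif gig fip gip dad).
pose rho i := 1 - 2 * (G i * F i / X i) / lie n n.
have Hstep : forall i, rho (i + 1) = rho i.
  move=> i; have [c1 [c2 [c3 [c4 [E h2 h4 _]]]]] := Hq i.
  have [eF eG eX h1 h3] := key i c1 c2 c3 c4 E h2 h4.
  have hX := HX i; have hX' := HX (i + 1).
  have EF : F i = - (c2 / c1) * F (i + 1).
    by apply: (mulfI h1); move/eqP: eF; rewrite addr_eq0 => /eqP ->; field.
  have EG : G i = - (c3 / c4) * G (i + 1).
    by apply: (mulfI h4); move/eqP: eG; rewrite addrC addr_eq0 => /eqP ->; field.
  have EX : X i = (c2 * c3) / (c1 * c4) * X (i + 1).
    by apply: (mulfI (mulf_neq0 h1 h4)); rewrite eX; field; rewrite h1 h4.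
  by rewrite /rho EF EG EX; field; rewrite HN h1 h2 h3 h4 hX'.
exists (q / rho 0) => i.
have [c1 [c2 [c3 [c4 [E h2 h4 Eq]]]]] := Hq i.
have [eF eG eX h1 h3] := key i c1 c2 c3 c4 E h2 h4.
have hX := HX i.
have hden : lie (f i) (sigma n (g i)) != 0.
  have [[fi0 fif fip] [gi0 gig gip]] := Hpts i.
  have [_ _ dad _] := Hnd i.
  exact: (lorentz Hp fi0 fif (sig_null HN gig) fip (sig_perp Hnp gip) dad).
exists c1, c2, c3, c4; split => //.
  apply/rowP => k; have := congr1 (fun z : 'rV[R]_6 => z 0 k) E; rewrite /sigma !mxE => e.
  transitivity ((c1 * f i 0 k + c2 * f (i+1) 0 k + c3 * g (i+1) 0 k + c4 * g i 0 k)
     - 2 / lie n n * (c3 * G (i+1) + c4 * G i) * n 0 k).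
    by rewrite /G; field.
  by rewrite e eG; ring.
rewrite -(int_const Hstep i) Eq.
rewrite lie_sigma_l in hden *.
rewrite /rho /F /G /X in hX hden *.
field; rewrite HN h4 hX /=.
have -> : lie (f i) (g i) * lie n n - 2 * lie (g i) n * lie (f i) n =
  (lie (f i) (g i) - 2 * lie (g i) n / lie n n * lie (f i) n) * lie n n.
  by field.
by rewrite mulf_neq0.
Qed.
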